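(* Let $\gamma:I\to\mathcal S$ be a Legendrian curve whose stress density vanishes identically, and let $t_*\in I$ with $a(t_* )=0$. Then $a^{(n)}(t_* )=0$ for every $n\ge0$.
   Context: Let $\mathbb C^{2,1}$ denote $\mathbb C^3$ with the pseudo-Hermitian form $\langle z,w\rangle=i(\bar z^1w^3-\bar z^3w^1)+\bar z^2w^2$ (conjugate-linear in the first slot); $\mathcal S=\{[z]\in\mathbb{CP}^2:\langle z,z\rangle=0\}$ with contact distribution $\ker\zeta$, $\zeta=-\frac{i}{\bar z^tz}\langle z,dz\rangle|_{T\mathcal S}$. A Legendrian curve is a smooth immersion $\gamma:I\to\mathcal S$ tangent to the contact distribution. A normalized lift is a smooth $\Gamma:I\to\mathbb C^3\setminus\{0\}$ with $\gamma=[\Gamma]$ and $\det(\Gamma,\Gamma',\Gamma'')=i$. The Fubini densities are $a=\mathrm{Im}\langle\Gamma''',\Gamma''\rangle$, $b=\frac12\langle\Gamma'',\Gamma''\rangle$ (independent of the normalized lift). The stress density is $$\begin{aligned}\mathtt t=&\tfrac{4400}{81}aa'^3a''+a^2\big(-\tfrac{400}{27}ba'^3-\tfrac{200}{9}a'a''^2-\tfrac{400}{27}a'^2a'''\big)+a^3\big(\tfrac{25}{3}a'^2b'+\tfrac{50}{3}ba'a''+\tfrac{50}{9}a''a'''+\tfrac{25}{9}a'a^{(4)}\big)\\&+a^4\big(-\tfrac{16}{3}b^2a'-5b'a''-3a'b''-\tfrac{10}{3}ba'''-\tfrac13a^{(5)}\big)+a^5\big(8bb'+b'''\big)-\tfrac{6160}{243}a'^5.\end{aligned}$$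 *)

(* Defs.v *)
From Stdlib Require Import Reals.
Open Scope R_scope.

Definition C := (R * R)%type.
Definition Cre (z : C) : R := fst z.
Definition Cim (z : C) : R := snd z.
Definition Cadd (z w : C) : C := (fst z + fst w, snd z + snd w).
Definition Csub (z w : C) : C := (fst z - fst w, snd z - snd w).
Definition Cmul (z w : C) : C :=
  (fst z * fst w - snd z * snd w, fst z * snd w + snd z * fst w).
Definition Cconj (z : C) : C := (fst z, - snd z).
Definition C0 : C := (0, 0).
Definition Ci : C := (0, 1).

Definition V3 := (C * C * C)%type.
Definition c1 (v : V3) : C := fst (fst v).
Definition c2 (v : V3) : C := snd (fst v).
Definition c3 (v : V3) : C := snd v.
Definition Vscale (c : C) (v : V3) : V3 :=
  (Cmul c (c1 v), Cmul c (c2 v), Cmul c (c3 v)).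

(** The pseudo-Hermitian form of C^{2,1}, conjugate-linear in the first slot:
    <z,w> = i (conj z1 w3 - conj z3 w1) + conj z2 w2. *)
Definition herm (z w : V3) : C :=
  Cadd (Cmul Ci (Csub (Cmul (Cconj (c1 z)) (c3 w)) (Cmul (Cconj (c3 z)) (c1 w))))
       (Cmul (Cconj (c2 z)) (c2 w)).

Definition det3 (u v w : V3) : C :=
  Csub (Cadd (Cadd (Cmul (c1 u) (Cmul (c2 v) (c3 w)))
                   (Cmul (c1 v) (Cmul (c2 w) (c3 u))))
             (Cmul (c1 w) (Cmul (c2 u) (c3 v))))
       (Cadd (Cadd (Cmul (c1 w) (Cmul (c2 v) (c3 u)))
                   (Cmul (c1 v) (Cmul (c2 u) (c3 w))))
             (Cmul (c1 u) (Cmul (c2 w) (c3 v)))).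

Definition is_open_interval (I : R -> Prop) : Prop :=
  (exists x, I x) /\
  (forall x y z, I x -> I z -> x <= y <= z -> I y) /\
  (forall x, I x -> exists eps, 0 < eps /\ forall y, Rabs (y - x) < eps -> I y).

(** D k is the k-th derivative of D 0 on I (so D 0 is smooth on I). *)
Definition deriv_seq (I : R -> Prop) (D : nat -> R -> R) : Prop :=
  forall k x, I x -> derivable_pt_lim (D k) x (D (S k) x).

Definition deriv_seq_V (I : R -> Prop) (G : nat -> R -> V3) : Prop :=
  deriv_seq I (fun k t => Cre (c1 (G k t))) /\
  deriv_seq I (fun k t => Cim (c1 (G k t))) /\
  deriv_seq I (fun k t => Cre (c2 (G k t))) /\
  deriv_seq I (fun k t => Cim (c2 (G k t))) /\
  deriv_seq I (fun k t => Cre (c3 (G k t))) /\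
  deriv_seq I (fun k t => Cim (c3 (G k t))).

(** G 0 = Gamma is a normalized lift of a Legendrian curve gamma = [Gamma] : I -> S. *)
Definition normalized_Legendrian_lift (I : R -> Prop) (G : nat -> R -> V3) : Prop :=
  deriv_seq_V I G /\
  (forall t, I t -> G 0%nat t <> (C0, C0, C0)) /\
  (forall t, I t -> herm (G 0%nat t) (G 0%nat t) = C0) /\               (* gamma in S *)
  (forall t, I t -> herm (G 0%nat t) (G 1%nat t) = C0) /\               (* Legendrian: zeta(gamma') = 0 *)
  (forall t, I t -> forall c : C, G 1%nat t <> Vscale c (G 0%nat t)) /\ (* gamma immersion *)
  (forall t, I t -> det3 (G 0%nat t) (G 1%nat t) (G 2%nat t) = Ci).

(** Fubini densities a = Im <Gamma''', Gamma''>, b = 1/2 <Gamma'', Gamma''>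
    (the latter is real; we take its real part). *)
Definition fubini_a (G : nat -> R -> V3) (t : R) : R :=
  Cim (herm (G 3%nat t) (G 2%nat t)).
Definition fubini_b (G : nat -> R -> V3) (t : R) : R :=
  / 2 * Cre (herm (G 2%nat t) (G 2%nat t)).

(** Stress density, with A n = a^(n)(t), B n = b^(n)(t). *)
Definition stress (A B : nat -> R) : R :=
  let a := A 0%nat in let a1 := A 1%nat in let a2 := A 2%nat in
  let a3 := A 3%nat in let a4 := A 4%nat in let a5 := A 5%nat in
  let b := B 0%nat in let b1 := B 1%nat in let b2 := B 2%nat in let b3 := B 3%nat in
  4400/81 * a * a1^3 * a2
  + a^2 * (- (400/27) * b * a1^3 - 200/9 * a1 * a2^2 - 400/27 * a1^2 * a3)
  + a^3 * (25/3 * a1^2 * b1 + 50/3 * b * a1 * a2 + 50/9 * a2 * a3 + 25/9 * a1 * a4)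
  + a^4 * (- (16/3) * b^2 * a1 - 5 * b1 * a2 - 3 * a1 * b2 - 10/3 * b * a3 - 1/3 * a5)
  + a^5 * (8 * b * b1 + b3)
  - 6160/243 * a1^5.

(* Main.v *)
Require Import Defs.
From Stdlib Require Import Reals Lra Lia Factorial.
Open Scope R_scope.


Definition shift (D : nat -> R -> R) : nat -> R -> R := fun n => D (S n).
Fixpoint P (n : nat) (D E : nat -> R -> R) : R -> R :=
  match n with
  | O => fun t => D O t * E O t
  | S n' => fun t => P n' (shift D) E t + P n' D (shift E) t
  end.
Definition Pr (D E : nat -> R -> R) : nat -> R -> R := fun n => P n D E.
Definition ordge (t0 : R) (D : nat -> R -> R) (p : nat) : Prop :=
  forall j, (j < p)%nat -> D j t0 = 0.
Definition shk (k : nat) (D : nat -> R -> R) : nat -> R -> R := fun n => D (k + n)%nat.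
Definition Ad (D E : nat -> R -> R) : nat -> R -> R := fun n t => D n t + E n t.
Definition Sc (c : R) (D : nat -> R -> R) : nat -> R -> R := fun n t => c * D n t.

Lemma ds_shift I D : deriv_seq I D -> deriv_seq I (shift D).
Proof. intros H k x Hx. apply (H (S k) x Hx). Qed.

Lemma ds_shk I k D : deriv_seq I D -> deriv_seq I (shk k D).
Proof. intros H n x Hx. unfold shk. replace (k + S n)%nat with (S (k + n)) by lia. apply H; auto. Qed.

Lemma ds_Ad I D E : deriv_seq I D -> deriv_seq I E -> deriv_seq I (Ad D E).
Proof. intros H1 H2 n x Hx. unfold Ad.
  apply (derivable_pt_lim_plus (D n) (E n)); auto. Qed.

Lemma ds_Sc I c D : deriv_seq I D -> deriv_seq I (Sc c D).
Proof. intros H1 n x Hx. unfold Sc.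
  apply (derivable_pt_lim_scal (D n) c); auto. Qed.

Lemma P_deriv I : forall k D E, deriv_seq I D -> deriv_seq I E ->
  forall x, I x -> derivable_pt_lim (P k D E) x (P (S k) D E x).
Proof.
  induction k; intros D E HD HE x Hx.
  - change (derivable_pt_lim (fun t => D 0%nat t * E 0%nat t) x
      (D 1%nat x * E 0%nat x + D 0%nat x * E 1%nat x)).
    apply (derivable_pt_lim_mult (D 0%nat) (E 0%nat)); auto.
  - change (derivable_pt_lim (fun t => P k (shift D) E t + P k D (shift E) t) x
      (P (S k) (shift D) E x + P (S k) D (shift E) x)).
    apply (derivable_pt_lim_plus (P k (shift D) E) (P k D (shift E))).
    + apply IHk; try apply (ds_shift I); auto.
    + apply IHk; try apply (ds_shift I); auto.
Qed.

Lemma ds_Pr I D E : deriv_seq I D -> deriv_seq I E -> deriv_seq I (Pr D E).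
Proof. intros H1 H2 n x Hx. unfold Pr. apply (P_deriv I); auto. Qed.

Lemma ordge_shiftS t0 D p : ordge t0 D (S p) -> ordge t0 (shift D) p.
Proof. intros H j Hj. unfold shift. apply H. lia. Qed.

Lemma ordge_shift t0 D p : ordge t0 D p -> ordge t0 (shift D) (p - 1).
Proof. intros H j Hj. unfold shift. apply H. lia. Qed.

Lemma ordge0 t0 D : ordge t0 D 0.
Proof. intros j Hj. lia. Qed.

Lemma vanish t0 : forall n D E p q, ordge t0 D p -> ordge t0 E q ->
  (n < p + q)%nat -> P n D E t0 = 0.
Proof.
  induction n; intros D E p q HD HE Hn.
  - simpl. destruct p.
    + rewrite (HE 0%nat) by lia. ring.
    + rewrite (HD 0%nat) by lia. ring.
  - change (P n (shift D) E t0 + P n D (shift E) t0 = 0).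
    rewrite (IHn (shift D) E (p - 1)%nat q), (IHn D (shift E) p (q - 1)%nat); auto using ordge_shift; try lia. ring.
Qed.

Lemma value t0 : forall n D E p q, ordge t0 D p -> ordge t0 E q -> (p + q = n)%nat ->
  P n D E t0 = INR (fact n) / (INR (fact p) * INR (fact q)) * D p t0 * E q t0.
Proof.
  induction n; intros D E p q HD HE Hn.
  - assert (p = 0%nat) by lia. assert (q = 0%nat) by lia. subst. simpl. field.
  - change (P n (shift D) E t0 + P n D (shift E) t0 =
      INR (fact (S n)) / (INR (fact p) * INR (fact q)) * D p t0 * E q t0).
    destruct p as [|p']; destruct q as [|q'].
    + lia.
    + rewrite (vanish t0 n (shift D) E 0%nat (S q')); auto using ordge0; try lia.
      rewrite (IHn D (shift E) 0%nat q'); auto using ordge_shiftS; try lia.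
      assert (q' = n) by lia. subst. unfold shift.
      replace (fact 0) with 1%nat by reflexivity.
      pose proof (INR_fact_neq_0 (S n)). pose proof (INR_fact_neq_0 n). change (INR 1) with 1. field. auto.
    + rewrite (vanish t0 n D (shift E) (S p') 0%nat); auto using ordge0; try lia.
      rewrite (IHn (shift D) E p' 0%nat); auto using ordge_shiftS; try lia.
      assert (p' = n) by lia. subst. unfold shift.
      replace (fact 0) with 1%nat by reflexivity.
      pose proof (INR_fact_neq_0 (S n)). pose proof (INR_fact_neq_0 n). change (INR 1) with 1. field. auto.
    + rewrite (IHn (shift D) E p' (S q')); auto using ordge_shiftS; try lia.
      rewrite (IHn D (shift E) (S p') q'); auto using ordge_shiftS; try lia.
      unfold shift.
      assert (n = p' + S q')%nat by lia. subst n.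
      rewrite !fact_simpl, !mult_INR.
      pose proof (INR_fact_neq_0 p'). pose proof (INR_fact_neq_0 q').
      pose proof (INR_fact_neq_0 (p' + S q')).
      pose proof (pos_INR p'). pose proof (pos_INR q').
      rewrite !S_INR, !plus_INR, !S_INR.
      field. repeat split; auto; lra.
Qed.

Lemma ordge_Pr t0 D E p q : ordge t0 D p -> ordge t0 E q -> ordge t0 (Pr D E) (p + q).
Proof. intros H1 H2 j Hj. unfold Pr. apply (vanish t0 j D E p q); auto. Qed.

Lemma val_Pr t0 D E p q : ordge t0 D p -> ordge t0 E q ->
  Pr D E (p + q)%nat t0 = INR (fact (p+q)) / (INR (fact p) * INR (fact q)) * D p t0 * E q t0.
Proof. intros. unfold Pr. apply value; auto. Qed.


Definition Q5 f1 f2 f3 f4 f5 := Pr f1 (Pr f2 (Pr f3 (Pr f4 f5))).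

Lemma ordge_Q5 t0 f1 f2 f3 f4 f5 p1 p2 p3 p4 p5 :
  ordge t0 f1 p1 -> ordge t0 f2 p2 -> ordge t0 f3 p3 -> ordge t0 f4 p4 -> ordge t0 f5 p5 ->
  ordge t0 (Q5 f1 f2 f3 f4 f5) (p1 + (p2 + (p3 + (p4 + p5)))).
Proof. intros. unfold Q5. repeat apply ordge_Pr; auto. Qed.

Lemma val_Q5 t0 f1 f2 f3 f4 f5 p1 p2 p3 p4 p5 :
  ordge t0 f1 p1 -> ordge t0 f2 p2 -> ordge t0 f3 p3 -> ordge t0 f4 p4 -> ordge t0 f5 p5 ->
  Q5 f1 f2 f3 f4 f5 (p1 + (p2 + (p3 + (p4 + p5))))%nat t0 =
  INR (fact (p1 + (p2 + (p3 + (p4 + p5))))) /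
   (INR (fact p1) * INR (fact p2) * INR (fact p3) * INR (fact p4) * INR (fact p5))
  * f1 p1 t0 * f2 p2 t0 * f3 p3 t0 * f4 p4 t0 * f5 p5 t0.
Proof.
  intros. unfold Q5.
  rewrite val_Pr by (repeat apply ordge_Pr; auto).
  rewrite val_Pr by (repeat apply ordge_Pr; auto).
  rewrite val_Pr by (repeat apply ordge_Pr; auto).
  rewrite val_Pr by (repeat apply ordge_Pr; auto).
  pose proof (INR_fact_neq_0 p1). pose proof (INR_fact_neq_0 p2).
  pose proof (INR_fact_neq_0 p3). pose proof (INR_fact_neq_0 p4).
  pose proof (INR_fact_neq_0 p5). pose proof (INR_fact_neq_0 (p4 + p5)).
  pose proof (INR_fact_neq_0 (p3 + (p4 + p5))). pose proof (INR_fact_neq_0 (p2 + (p3 + (p4 + p5)))).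
  field. repeat split; auto.
Qed.

Lemma ordge_shk t0 A m k : ordge t0 A m -> ordge t0 (shk k A) (m - k).
Proof. intros H j Hj. unfold shk. apply H. lia. Qed.

Lemma val_shk t0 A m k : (k <= m)%nat -> shk k A (m - k)%nat t0 = A m t0.
Proof. intros. unfold shk. f_equal. lia. Qed.

Definition g (m k : nat) : R := if Nat.leb k m then / INR (fact (m - k)) else 0.

Lemma termA t0 A m k1 k2 k3 k4 k5 : (1 <= m)%nat -> ordge t0 A m ->
  (k1 + k2 + k3 + k4 + k5 = 5)%nat ->
  Q5 (shk k1 A) (shk k2 A) (shk k3 A) (shk k4 A) (shk k5 A) (5 * m - 5)%nat t0 =
  INR (fact (5 * m - 5)) * (g m k1 * g m k2 * g m k3 * g m k4 * g m k5) * A m t0 ^ 5.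
Proof.
  intros Hm HA Hk. unfold g.
  destruct (Nat.leb_spec k1 m); destruct (Nat.leb_spec k2 m); destruct (Nat.leb_spec k3 m);
  destruct (Nat.leb_spec k4 m); destruct (Nat.leb_spec k5 m);
  try (rewrite (ordge_Q5 t0 _ _ _ _ _ (m - k1) (m - k2) (m - k3) (m - k4) (m - k5));
       [ring | apply ordge_shk; auto .. | lia]).
  replace (5 * m - 5)%nat with ((m - k1) + ((m - k2) + ((m - k3) + ((m - k4) + (m - k5)))))%nat by lia.
  rewrite val_Q5 by (apply ordge_shk; auto).
  rewrite !val_shk by auto.
  pose proof (INR_fact_neq_0 (m - k1)). pose proof (INR_fact_neq_0 (m - k2)).
  pose proof (INR_fact_neq_0 (m - k3)). pose proof (INR_fact_neq_0 (m - k4)).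
  pose proof (INR_fact_neq_0 (m - k5)).
  field. repeat split; auto.
Qed.

Lemma termB t0 A X m k1 k2 k3 k4 k5 : (1 <= m)%nat -> ordge t0 A m ->
  (k1 + k2 + k3 + k4 + k5 <= 3)%nat ->
  Pr (Q5 (shk k1 A) (shk k2 A) (shk k3 A) (shk k4 A) (shk k5 A)) X (5 * m - 5)%nat t0 = 0.
Proof.
  intros Hm HA Hk.
  pose proof (ordge_Pr t0 _ X _ 0%nat (ordge_Q5 t0 _ _ _ _ _ (m - k1) (m - k2) (m - k3) (m - k4) (m - k5)
    (ordge_shk _ _ _ _ HA) (ordge_shk _ _ _ _ HA) (ordge_shk _ _ _ _ HA) (ordge_shk _ _ _ _ HA)
    (ordge_shk _ _ _ _ HA)) (ordge0 t0 X)).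
  apply H. lia.
Qed.

Lemma deriv_loc_zero f x l eps : 0 < eps -> (forall y, Rabs (y - x) < eps -> f y = 0) ->
  derivable_pt_lim f x l -> l = 0.
Proof.
  intros He Hz Hd. destruct (Req_dec l 0) as [|Hl]; auto.
  assert (Hl' : 0 < Rabs l) by (apply Rabs_pos_lt; auto).
  destruct (Hd _ Hl') as [d Hdd].
  pose proof (cond_pos d) as Hdp.
  set (h := Rmin d eps / 2).
  assert (Hmin1 : Rmin d eps <= d) by apply Rmin_l.
  assert (Hmin2 : Rmin d eps <= eps) by apply Rmin_r.
  assert (Hmp : 0 < Rmin d eps) by (apply Rmin_pos; auto).
  assert (Hh : 0 < h) by (unfold h; lra).
  assert (Habs : Rabs h = h) by (apply Rabs_pos_eq; lra).
  specialize (Hdd h ltac:(lra) ltac:(rewrite Habs; unfold h; lra)).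
  rewrite (Hz (x + h)) in Hdd by (replace (x + h - x) with h by ring; rewrite Habs; unfold h; lra).
  rewrite (Hz x) in Hdd by (replace (x - x) with 0 by ring; rewrite Rabs_R0; lra).
  replace ((0 - 0) / h - l) with (- l) in Hdd by (field; lra).
  rewrite Rabs_Ropp in Hdd. lra.
Qed.

Lemma zero_seq I S : is_open_interval I -> deriv_seq I S -> (forall t, I t -> S 0%nat t = 0) ->
  forall n t, I t -> S n t = 0.
Proof.
  intros [_ [_ Hop]] HS H0. induction n; intros t Ht; auto.
  destruct (Hop t Ht) as [eps [He Hb]].
  apply (deriv_loc_zero (S n) t _ eps He).
  - intros y Hy. apply IHn. apply Hb. auto.
  - apply HS; auto.
Qed.


Definition Qg (m : nat) : R :=
  4400/81 * (g m 0 * g m 1 * g m 1 * g m 1 * g m 2)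
  - 200/9 * (g m 0 * g m 0 * g m 1 * g m 2 * g m 2)
  - 400/27 * (g m 0 * g m 0 * g m 1 * g m 1 * g m 3)
  + 50/9 * (g m 0 * g m 0 * g m 0 * g m 2 * g m 3)
  + 25/9 * (g m 0 * g m 0 * g m 0 * g m 1 * g m 4)
  - 1/3 * (g m 0 * g m 0 * g m 0 * g m 0 * g m 5)
  - 6160/243 * (g m 1 * g m 1 * g m 1 * g m 1 * g m 1).

Lemma Qg_neq0 m : (1 <= m)%nat -> Qg m <> 0.
Proof.
  intros Hm.
  destruct m as [|[|[|[|[|n]]]]]; try lia;
  [ unfold Qg, g; cbn [Nat.leb Nat.sub fact Nat.mul Nat.add]; simpl INR; intro HQ; field_simplify in HQ; lra .. | ].
  unfold Qg, g; cbn [Nat.leb Nat.sub].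
  rewrite Nat.sub_0_r.
  rewrite !fact_simpl, !mult_INR, !S_INR.
  pose proof (pos_INR n). pose proof (INR_fact_lt_0 n).
  set (x := INR n) in *. set (F := INR (fact n)) in *.
  match goal with |- ?e <> 0 => assert (E : e = - (4/243) * (x+5) *
     (4*(x+5)^4 + 60*(x+5)^3 + 315*(x+5)^2 + 675*(x+5) + 486) /
     ((x+1+1+1+1+1)*(x+1+1+1+1)*(x+1+1+1)*(x+1+1)*(x+1)*F)^5) end.
  { field. repeat split; lra. }
  rewrite E. clear E.
  assert (0 < (x+1+1+1+1+1)*(x+1+1+1+1)*(x+1+1+1)*(x+1+1)*(x+1)*F).
  { repeat apply Rmult_lt_0_compat; lra. }
  assert (0 < 4*(x+5)^4 + 60*(x+5)^3 + 315*(x+5)^2 + 675*(x+5) + 486).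
  { assert (0 < x + 5) by lra. assert (0 < (x+5)^2) by (apply pow_lt; lra).
    assert (0 < (x+5)^3) by (apply pow_lt; lra). assert (0 < (x+5)^4) by (apply pow_lt; lra). lra. }
  apply Rlt_not_eq. unfold Rdiv. apply Rmult_neg_pos.
  - assert (0 < (x+5) * (4*(x+5)^4 + 60*(x+5)^3 + 315*(x+5)^2 + 675*(x+5) + 486)) by (apply Rmult_lt_0_compat; lra).
    nra.
  - apply Rinv_0_lt_compat. apply pow_lt. auto.
Qed.


Definition Sfun (As Bs : nat -> R -> R) : nat -> R -> R :=
  let a k := shk k As in let b k := shk k Bs in
  Ad (Sc (4400/81) (Q5 (a 0%nat) (a 1%nat) (a 1%nat) (a 1%nat) (a 2%nat)))
 (Ad (Sc (-(400/27)) (Pr (Q5 (a 0%nat) (a 0%nat) (a 1%nat) (a 1%nat) (a 1%nat)) (b 0%nat)))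
 (Ad (Sc (-(200/9)) (Q5 (a 0%nat) (a 0%nat) (a 1%nat) (a 2%nat) (a 2%nat)))
 (Ad (Sc (-(400/27)) (Q5 (a 0%nat) (a 0%nat) (a 1%nat) (a 1%nat) (a 3%nat)))
 (Ad (Sc (25/3) (Pr (Q5 (a 0%nat) (a 0%nat) (a 0%nat) (a 1%nat) (a 1%nat)) (b 1%nat)))
 (Ad (Sc (50/3) (Pr (Q5 (a 0%nat) (a 0%nat) (a 0%nat) (a 1%nat) (a 2%nat)) (b 0%nat)))
 (Ad (Sc (50/9) (Q5 (a 0%nat) (a 0%nat) (a 0%nat) (a 2%nat) (a 3%nat)))
 (Ad (Sc (25/9) (Q5 (a 0%nat) (a 0%nat) (a 0%nat) (a 1%nat) (a 4%nat)))
 (Ad (Sc (-(16/3)) (Pr (Q5 (a 0%nat) (a 0%nat) (a 0%nat) (a 0%nat) (a 1%nat)) (Pr (b 0%nat) (b 0%nat))))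
 (Ad (Sc (-5) (Pr (Q5 (a 0%nat) (a 0%nat) (a 0%nat) (a 0%nat) (a 2%nat)) (b 1%nat)))
 (Ad (Sc (-3) (Pr (Q5 (a 0%nat) (a 0%nat) (a 0%nat) (a 0%nat) (a 1%nat)) (b 2%nat)))
 (Ad (Sc (-(10/3)) (Pr (Q5 (a 0%nat) (a 0%nat) (a 0%nat) (a 0%nat) (a 3%nat)) (b 0%nat)))
 (Ad (Sc (-(1/3)) (Q5 (a 0%nat) (a 0%nat) (a 0%nat) (a 0%nat) (a 5%nat)))
 (Ad (Sc 8 (Pr (Q5 (a 0%nat) (a 0%nat) (a 0%nat) (a 0%nat) (a 0%nat)) (Pr (b 0%nat) (b 1%nat))))
 (Ad (Sc 1 (Pr (Q5 (a 0%nat) (a 0%nat) (a 0%nat) (a 0%nat) (a 0%nat)) (b 3%nat)))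
 (Sc (-(6160/243)) (Q5 (a 1%nat) (a 1%nat) (a 1%nat) (a 1%nat) (a 1%nat))))))))))))))))).

Lemma ds_Sfun I As Bs : deriv_seq I As -> deriv_seq I Bs -> deriv_seq I (Sfun As Bs).
Proof.
  intros HA HB. unfold Sfun, Q5.
  repeat first [apply ds_Ad | apply ds_Sc | apply ds_Pr | apply ds_shk]; auto.
Qed.

Lemma Sfun0 As Bs t : Sfun As Bs 0%nat t = stress (fun n => As n t) (fun n => Bs n t).
Proof.
  unfold Sfun, Ad, Sc, Q5, Pr, shk, stress. simpl. ring.
Qed.

Theorem mainTheorem5
  (I : R -> Prop) (G : nat -> R -> V3) (As Bs : nat -> R -> R) (tstar : R) :
  is_open_interval I ->
  normalized_Legendrian_lift I G ->
  deriv_seq I As -> (forall t, I t -> As 0%nat t = fubini_a G t) ->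
  deriv_seq I Bs -> (forall t, I t -> Bs 0%nat t = fubini_b G t) ->
  (forall t, I t -> stress (fun n => As n t) (fun n => Bs n t) = 0) ->
  I tstar -> fubini_a G tstar = 0 ->
  forall n : nat, As n tstar = 0.
Proof.
  intros HI HL HA HA0 HB HB0 Hst Ht Ha.
  assert (Hstep : forall m, ordge tstar As m -> As m tstar = 0).
  { intros m IH. destruct m as [|m'].
    - rewrite HA0; auto.
    - pose proof (zero_seq I (Sfun As Bs) HI (ds_Sfun I As Bs HA HB)
        (fun t Hti => eq_trans (Sfun0 As Bs t) (Hst t Hti)) (5 * S m' - 5)%nat tstar Ht) as Z.
      unfold Sfun, Ad, Sc in Z.
      rewrite !termB in Z by (auto; lia).
      rewrite !termA in Z by (auto; lia).
      assert (Z2 : INR (fact (5 * S m' - 5)) * Qg (S m') * As (S m') tstar ^ 5 = 0).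
      { unfold Qg. rewrite <- Z. ring. }
      apply Rmult_integral in Z2. destruct Z2 as [Z2|Z2].
      + apply Rmult_integral in Z2. destruct Z2 as [Z2|Z2].
        * exfalso. apply (INR_fact_neq_0 _ Z2).
        * exfalso. apply (Qg_neq0 (S m')); auto; lia.
      + destruct (Req_dec (As (S m') tstar) 0) as [E|E]; auto.
        exfalso. apply (pow_nonzero _ 5 E Z2). }
  assert (Hall : forall m, ordge tstar As m).
  { induction m.
    - apply ordge0.
    - intros j Hj. destruct (Nat.eq_dec j m) as [->|Hne].
      + apply Hstep; auto.
      + apply IHm. lia. }
  intro n. apply (Hall (S n)). lia.
Qed.
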